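(* Let $C\in\mathbb{R}^{n\times n}$ be symmetric positive definite, let $F\in\mathbb{R}^{n\times n_p}$ with $n_p<n$ have full column rank, and let $\beta>\beta_\ell>0$. Set $\hat{C}=C+\beta FF^T$ and $\hat{C}_\ell=C+\beta_\ell FF^T$. For $\mathbf{b}\in\mathbb{R}^n$ consider the stationary iteration $$\mathbf{w}_{k+1}=\mathbf{w}_k+\frac{\beta_\ell}{\beta}\hat{C}_\ell^{-1}\left(\mathbf{b}-\hat{C}\mathbf{w}_k\right),\qquad k=0,1,2,\dots$$ Its iteration matrix $G=I-\frac{\beta_\ell}{\beta}\hat{C}_\ell^{-1}\hat{C}$ satisfies $G=\left(1-\frac{\beta_\ell}{\beta}\right)\hat{C}_\ell^{-1}C$ and has spectral radius exactly $1-\beta_\ell/\beta<1$. Consequently, for every $\mathbf{b}$ and every initial guess $\mathbf{w}_0$, the iterates $\mathbf{w}_k$ converge to the unique solution of $\hat{C}\mathbf{w}=\mathbf{b}$, with asymptotic convergence factor $1-\beta_\ell/\beta$ (i.e., rate $R=\log(1-\beta_\ell/\beta)$ in the paper's convention). *)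

(* Defs.v *)
From HB Require Import structures.
From mathcomp Require Import all_boot all_order all_algebra.
From mathcomp Require Import all_classical all_reals all_analysis.
From mathcomp.real_closed Require Import complex.
Set Implicit Arguments. Unset Strict Implicit. Unset Printing Implicit Defensive.
Import Order.TTheory GRing.Theory Num.Theory.
Import numFieldNormedType.Exports.
Local Open Scope ring_scope.

Definition spd (R : realFieldType) (n : nat) (C : 'M[R]_n) : Prop :=
  C^T = C /\ forall x : 'cV[R]_n, x != 0 -> 0 < (x^T *m C *m x) 0 0.

Definition ceigenvalue (R : rcfType) (n : nat) (A : 'M[R]_n) (l : R[i]) : bool :=
  eigenvalue (map_mx (real_complex R) A) l.

Definition is_spectral_radius (R : rcfType) (n : nat) (A : 'M[R]_n) (r : R) : Prop :=
  (exists l : R[i], ceigenvalue A l /\ `|l| = (r%:C)%C) /\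
  (forall l : R[i], ceigenvalue A l -> `|l| <= (r%:C)%C).

Fixpoint iterate (R : fieldType) (n : nat) (Ch Chl : 'M[R]_n) (ratio : R)
    (rhs w0 : 'cV[R]_n) (k : nat) : 'cV[R]_n :=
  match k with
  | 0 => w0
  | k'.+1 => let w := iterate Ch Chl ratio rhs w0 k' in
             w + ratio *: (invmx Chl *m (rhs - Ch *m w))
  end.

(* Main.v *)
Require Import Defs.
From HB Require Import structures.
From mathcomp Require Import all_boot all_order all_algebra.
From mathcomp Require Import all_classical all_reals all_analysis.
From mathcomp.real_closed Require Import complex.
From mathcomp Require Import lra.
Import Order.TTheory GRing.Theory Num.Theory.
Import numFieldNormedType.Exports.
From mathcomp Require Import ring.
Set Implicit Arguments. Unset Strict Implicit.
Local Open Scope classical_set_scope.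
Local Open Scope ring_scope.

Section QF.
Variable R : realType.
Variable n : nat.
Implicit Types (A : 'M[R]_n) (u v : 'cV[R]_n).

Definition qf A u v : R := (u^T *m A *m v) 0 0.

Lemma qfDl A u1 u2 v : qf A (u1 + u2) v = qf A u1 v + qf A u2 v.
Proof. by rewrite /qf linearD /= !mulmxDl mxE. Qed.
Lemma qfZl A s u v : qf A (s *: u) v = s * qf A u v.
Proof. by rewrite /qf linearZ /= -!scalemxAl mxE. Qed.
Lemma qfDr A u v1 v2 : qf A u (v1 + v2) = qf A u v1 + qf A u v2.
Proof. by rewrite /qf mulmxDr mxE. Qed.
Lemma qfZr A s u v : qf A u (s *: v) = s * qf A u v.
Proof. by rewrite /qf -scalemxAr mxE. Qed.
Lemma qfDm A1 A2 u v : qf (A1 + A2) u v = qf A1 u v + qf A2 u v.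
Proof. by rewrite /qf mulmxDr mulmxDl mxE. Qed.
Lemma qfZm A s u v : qf (s *: A) u v = s * qf A u v.
Proof. by rewrite /qf -scalemxAr -scalemxAl mxE. Qed.
Lemma qfNl A u v : qf A (- u) v = - qf A u v.
Proof. by rewrite -scaleN1r qfZl mulN1r. Qed.
Lemma qfNr A u v : qf A u (- v) = - qf A u v.
Proof. by rewrite -scaleN1r qfZr mulN1r. Qed.
Lemma qf0r A u : qf A u 0 = 0.
Proof. by rewrite /qf mulmx0 mxE. Qed.
Lemma qfsym A u v : A^T = A -> qf A u v = qf A v u.
Proof.
move=> hA; rewrite /qf.
rewrite -[in LHS](trmxK (u^T *m A *m v)) [in LHS]mxE.
by rewrite !trmx_mul trmxK hA mulmxA.
Qed.

Lemma qfFF m (F : 'M[R]_(n, m)) u : 0 <= qf (F *m F^T) u u.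
Proof.
rewrite /qf mulmxA -(mulmxA _ F^T) -[u^T *m F](trmxK) trmx_mul trmxK mxE.
apply: sumr_ge0 => j _; rewrite [X in X * _]mxE -expr2; exact: sqr_ge0.
Qed.

Lemma qf_ge0 A u : spd A -> 0 <= qf A u u.
Proof.
case=> _ hp; have [->|h] := eqVneq u 0; first by rewrite qf0r.
exact/ltW/hp.
Qed.

Lemma spd_add A m (F : 'M[R]_(n, m)) s : spd A -> 0 <= s -> spd (A + s *: (F *m F^T)).
Proof.
case=> hs hp hs0; split.
  by rewrite linearD /= linearZ /= trmx_mul trmxK hs.
move=> x x0; change (0 < qf (A + s *: (F *m F^T)) x x); rewrite qfDm qfZm.
apply: (lt_le_trans (hp x x0)); rewrite lerDl; apply: mulr_ge0 => //; exact: qfFF.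
Qed.

Lemma spd_unit A : spd A -> A \in unitmx.
Proof.
case=> hs hp; rewrite unitmxE unitfE; apply/negP => /det0P [v v0 hv].
have := hp v^T; rewrite trmx_eq0 => /(_ v0).
by rewrite /qf trmxK hv mul0mx mxE ltxx.
Qed.

Lemma CS A u v : spd A -> qf A u v ^+ 2 <= qf A u u * qf A v v.
Proof.
move=> hA; have [->|v0] := eqVneq v 0; first by rewrite !qf0r expr0n /= mulr0.
have hp : 0 < qf A v v by apply: hA.2.
set p := qf A v v in hp *; set c := qf A u v; set s := c / p.
have hc : c = s * p by rewrite /s mulfVK // gt_eqF.
have := qf_ge0 (u + (- s) *: v) hA.
rewrite qfDl !qfDr !qfZl !qfZr (qfsym v u hA.1) -/c -/p.
rewrite hc; move: hp; set uu := qf A u u; clearbody s p uu; clear -s p uu.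

nra.
Qed.

End QF.
Lemma eig_col (F : fieldType) n (g : 'M[F]_n) a :
  eigenvalue g a <-> exists2 v : 'cV_n, g *m v = a *: v & v != 0.
Proof.
split.
  case/eigenvalueP => v hv v0.
  have hd : \det (g - a%:M) == 0.
    by apply/det0P; exists v => //; rewrite mulmxBr hv mul_mx_scalar subrr.
  rewrite -det_tr in hd; case/det0P: hd => w w0 hw.
  exists w^T; last by rewrite trmx_eq0.
  have : (w *m (g - a%:M)^T)^T = 0 by rewrite hw trmx0.
  rewrite trmx_mul trmxK mulmxBl mul_scalar_mx => /eqP; rewrite subr_eq0 => /eqP //.
case=> v hv v0.
have hd : \det (g - a%:M)^T == 0.
  apply/det0P; exists v^T; first by rewrite trmx_eq0.
  by rewrite -trmx_mul mulmxBl hv mul_scalar_mx subrr trmx0.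
rewrite det_tr in hd; case/det0P: hd => w w0 hw.
apply/eigenvalueP; exists w => //.
by move/eqP: hw; rewrite mulmxBr mul_mx_scalar subr_eq0 => /eqP.
Qed.

Section Cx.
Variable R : rcfType.
Local Notation Re := (@complex.Re R).
Local Notation Im := (@complex.Im R).
Lemma ReD (x y : R[i]) : Re (x + y) = Re x + Re y. Proof. case: x => a b; case: y => c d; reflexivity. Qed.
Lemma ImD (x y : R[i]) : Im (x + y) = Im x + Im y. Proof. case: x => a b; case: y => c d; reflexivity. Qed.
Lemma Re0 : Re (0 : R[i]) = 0. Proof. by []. Qed.
Lemma Im0 : Im (0 : R[i]) = 0. Proof. by []. Qed.
Lemma ReM (x y : R[i]) : Re (x * y) = Re x * Re y - Im x * Im y.
Proof. case: x => a b; case: y => c d; reflexivity. Qed.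
Lemma ImM (x y : R[i]) : Im (x * y) = Re x * Im y + Im x * Re y.
Proof. by case: x => a b; case: y => c d /=; rewrite addrC. Qed.
Lemma Rerc (g : R) : Re (g%:C)%C = g. Proof. by []. Qed.
Lemma Imrc (g : R) : Im (g%:C)%C = 0. Proof. by []. Qed.
End Cx.

Lemma aux_G (R : realType) n (C P : 'M[R]_n) b bl : b != 0 ->
  C + bl *: P - (bl / b) *: (C + b *: P) = (1 - bl / b) *: C.
Proof. by move=> hb; apply/matrixP => i j; rewrite !mxE; field. Qed.

Theorem lemma3p2 (R : realType) (n np : nat) (C : 'M[R]_n) (F : 'M[R]_(n, np))
    (beta betal : R) :
  (np < n)%N -> spd C -> \rank F = np -> 0 < betal -> betal < beta ->
  let Ch := C + beta *: (F *m F^T) in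
  let Chl := C + betal *: (F *m F^T) in
  let G := 1%:M - (betal / beta) *: (invmx Chl *m Ch) in
  G = (1 - betal / beta) *: (invmx Chl *m C) /\
  is_spectral_radius G (1 - betal / beta) /\
  1 - betal / beta < 1 /\
  forall b : 'cV[R]_n,
    exists2 wstar : 'cV[R]_n,
      Ch *m wstar = b /\ (forall w : 'cV[R]_n, Ch *m w = b -> w = wstar) &
      forall w0 : 'cV[R]_n, forall i : 'I_n,
        (fun k : nat => iterate Ch Chl (betal / beta) b w0 k i 0 : R) @ \oo --> (wstar i 0 : R).
Proof.
move=> hnp hC hF hbl hb Ch Chl G.
have eG : G = 1%:M - (betal / beta) *: (invmx Chl *m Ch) by [].
clearbody G.
have eChl : Chl = C + betal *: (F *m F^T) by [].
have eCh : Ch = C + beta *: (F *m F^T) by [].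
clearbody Chl Ch.
have hb0 : 0 < beta by apply: lt_trans hb.
set r := betal / beta.
have hr0 : 0 < r by rewrite /r divr_gt0.
have hr1 : r < 1 by rewrite /r ltr_pdivrMr // mul1r.
set t := 1 - r.
have ht0 : 0 <= t by rewrite /t subr_ge0 ltW.
have ht1 : t < 1 by rewrite /t ltrBlDr ltrDl.
have hChl : spd Chl by rewrite eChl; apply: spd_add => //; exact: ltW.
have hCh : spd Ch by rewrite eCh; apply: spd_add => //; exact: ltW.
have uChl := spd_unit hChl.
have uCh := spd_unit hCh.
have hleC : forall x, qf C x x <= qf Chl x x.
  move=> x; rewrite eChl qfDm qfZm lerDl; apply: mulr_ge0; [exact: ltW|exact: qfFF].
have hGM : G = t *: (invmx Chl *m C).
  have h1 : Chl *m G = t *: C.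
    rewrite eG mulmxBr mulmx1 -scalemxAr mulmxA mulmxV // mul1mx eChl eCh.
    by apply: aux_G; rewrite gt_eqF.
  by rewrite -[G](mulKmx uChl) h1 -scalemxAr.
have hcontr : forall v, qf Chl (G *m v) (G *m v) <= t ^+ 2 * qf Chl v v.
  move=> v; rewrite hGM -scalemxAl qfZl qfZr mulrA -expr2.
  apply: ler_wpM2l; first exact: sqr_ge0.
  set y := invmx Chl *m C *m v.
  have hy : Chl *m y = C *m v by rewrite /y -mulmxA mulKVmx.
  have hN : qf Chl y y = qf C y v by rewrite /qf -mulmxA hy mulmxA.
  apply: le_trans (hleC v).
  have hcs := CS y v hC.
  have hyy := hleC y.
  have hN0 : 0 <= qf Chl y y := qf_ge0 y hChl.
  have hv0 : 0 <= qf C v v := qf_ge0 v hC.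
  have hcy0 : 0 <= qf C y y := qf_ge0 y hC.
  rewrite -hN in hcs.
  have h2 : qf Chl y y ^+ 2 <= qf Chl y y * qf C v v.
    apply: le_trans hcs _; apply: ler_wpM2r => //.
  have [->|hpos] := eqVneq (qf Chl y y) 0; first by [].
  have hpos' : 0 < qf Chl y y by rewrite lt_def hpos.
  by rewrite -(ler_pM2l hpos') -expr2.
split; first exact: hGM.
split.
  split.
    have hk : kermx F != 0.
      by rewrite -mxrank_eq0 mxrank_ker hF subn_eq0 -ltnNge hnp.
    set v := nz_row (kermx F).
    have v0 : v != 0 by rewrite nz_row_eq0.
    have hvF : v *m F = 0 by apply/sub_kermxP; exact: nz_row_sub.
    have hFx : F^T *m v^T = 0 by rewrite -trmx_mul hvF trmx0.
    have hCx : Chl *m v^T = C *m v^T.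
      by rewrite eChl mulmxDl -scalemxAl -mulmxA hFx mulmx0 scaler0 addr0.
    have hGx : G *m v^T = t *: v^T.
      by rewrite hGM -scalemxAl -mulmxA -hCx mulKmx.
    exists (t%:C)%C; split.
      rewrite /ceigenvalue; apply/eig_col; exists (map_mx (real_complex R) v^T).
        by rewrite -map_mxM hGx map_mxZ.
      by rewrite map_mx_eq0 trmx_eq0.
    by rewrite ger0_norm // ler0c.
  move=> l /eig_col [z hz z0].
  set x := map_mx (@complex.Re R) z.
  set y := map_mx (@complex.Im R) z.
  set a := complex.Re l.
  set c := complex.Im l.
  have hGx : G *m x = a *: x - c *: y.
    apply/matrixP => i j; have := congr1 (fun M : 'cV[R[i]]_n => complex.Re (M i j)) hz.
    rewrite /x /y !mxE (big_morph _ (@ReD R) (@Re0 R)) ReM.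
    under eq_bigr => k _ do rewrite mxE ReM Rerc Imrc mul0r subr0.
    by move=> h; rewrite /a /c -h; apply: eq_bigr => k _; rewrite mxE.
  have hGy : G *m y = c *: x + a *: y.
    apply/matrixP => i j; have := congr1 (fun M : 'cV[R[i]]_n => complex.Im (M i j)) hz.
    rewrite /x /y !mxE (big_morph _ (@ImD R) (@Im0 R)) ImM.
    under eq_bigr => k _ do rewrite mxE ImM Rerc Imrc mul0r addr0.
    by move=> h; rewrite /a /c addrC -h; apply: eq_bigr => k _; rewrite mxE.
  have hS : 0 < qf Chl x x + qf Chl y y.
    have hx0 := qf_ge0 x hChl; have hy0 := qf_ge0 y hChl.
    case: (eqVneq x 0) => [x0|x0]; last first.
      have := hChl.2 x x0; rewrite -/(qf Chl x x) => h; lra.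
    case: (eqVneq y 0) => [y0|y0]; last first.
      have := hChl.2 y y0; rewrite -/(qf Chl y y) => h; lra.
    exfalso; move/negP: z0; apply; apply/eqP/matrixP => i j.
    have := congr1 (fun M : 'cV[R]_n => M i j) x0; have := congr1 (fun M : 'cV[R]_n => M i j) y0.
    rewrite /x /y !mxE; case: (z i j) => p q /= -> -> //.
  have hid : qf Chl (G *m x) (G *m x) + qf Chl (G *m y) (G *m y) =
      (a ^+ 2 + c ^+ 2) * (qf Chl x x + qf Chl y y).
    rewrite hGx hGy !(qfDl, qfDr, qfZl, qfZr, qfNl, qfNr) (qfsym y x hChl.1).
    ring.
  have hle : (a ^+ 2 + c ^+ 2) * (qf Chl x x + qf Chl y y) <=
             t ^+ 2 * (qf Chl x x + qf Chl y y).
    rewrite -hid mulrDr; apply: lerD; exact: hcontr.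
  rewrite ler_pM2r // in hle.
  rewrite normc_def lecR -/a -/c -(ger0_norm ht0) -sqrtr_sqr.
  exact: ler_wsqrtr.
split; first exact: ht1.
move=> b.
exists (invmx Ch *m b).
  split; first by rewrite mulKVmx.
  by move=> w hw; rewrite -hw mulKmx.
move=> w0 i.
set ws := invmx Ch *m b.
have hbw : b = Ch *m ws by rewrite /ws mulKVmx.
set e := fun k => iterate Ch Chl r b w0 k - ws.
have he : forall k, e k.+1 = G *m e k.
  move=> k; rewrite /e /=; set w := iterate Ch Chl r b w0 k.
  have -> : b - Ch *m w = - (Ch *m (w - ws)) by rewrite hbw mulmxBr opprB.
  rewrite eG mulmxBl mul1mx -scalemxAl -mulmxA mulmxN scalerN.
  by rewrite addrAC.
have hN : forall k, qf Chl (e k) (e k) <= (t ^+ 2) ^+ k * qf Chl (e 0) (e 0).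
  elim=> [|k IH]; first by rewrite expr0 mul1r.
  rewrite he exprS -mulrA; apply: le_trans (hcontr _) _.
  by apply: ler_wpM2l => //; exact: sqr_ge0.
set u := invmx Chl *m delta_mx i (0 : 'I_1).
have hcoord : forall v : 'cV[R]_n, v i 0 = qf Chl u v.
  move=> v; rewrite /qf /u trmx_mul trmx_inv hChl.1 trmx_delta.
  by rewrite -(mulmxA _ (invmx Chl)) mulVmx // mulmx1 -rowE mxE.
set K := qf Chl u u.
have hK : 0 <= K := qf_ge0 u hChl.
have hN0 : 0 <= qf Chl (e 0) (e 0) := qf_ge0 _ hChl.
set cc := Num.sqrt (K * qf Chl (e 0) (e 0)).
have hbound : forall k, `|e k i 0| <= cc * t ^+ k.
  move=> k; rewrite -sqrtr_sqr.
  have h : e k i 0 ^+ 2 <= (K * qf Chl (e 0) (e 0)) * (t ^+ k) ^+ 2.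
    rewrite hcoord; apply: le_trans (CS u (e k) hChl) _.
    rewrite -mulrA; apply: ler_wpM2l => //.
    by rewrite mulrC -exprM mulnC exprM; exact: hN.
  apply: le_trans (ler_wsqrtr h) _.
  by rewrite sqrtrM ?mulr_ge0 // sqrtr_sqr ger0_norm // exprn_ge0.
apply/subr_cvg0.
have hg : (fun k => cc * t ^+ k) @ \oo --> 0.
  have := cvg_geometric cc (z := t); rewrite ger0_norm // => /(_ ht1).
  by [].
apply: (@squeeze_cvgr _ _ _ _ (fun k => - (cc * t ^+ k)) (fun k => cc * t ^+ k)) => //.
  apply: nearW => k /=; have := hbound k; rewrite ler_norml /e mxE [(- ws) i 0]mxE.
  by [].
by rewrite -oppr0; apply: (cvgN hg).
Qed.
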